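(* Let $R$ be a ring with unit and let $C$ be a chain complex of projective $R$-modules which is $R$-finitely dominated. Then for every chain map $f \colon C \to C$, the mapping cone $\mathrm{Cone}(f)$ is homotopy $R$-finite.
   Context: A chain complex of $R$-modules is $R$-finitely dominated if it is chain homotopy equivalent to a bounded complex of finitely generated projective $R$-modules, and homotopy $R$-finite if it is chain homotopy equivalent to a bounded complex of finitely generated free $R$-modules. For a chain map $f \colon C \to B$, the mapping cone is given by $\mathrm{Cone}(f)_k = C_{k-1} \oplus B_k$ with differential $(c, b) \mapsto (-\partial c, f(c) + \partial b)$. *)

(* Defs.v *)
From HB Require Import structures.
From mathcomp Require Import all_boot all_order all_algebra.
Set Implicit Arguments. Unset Strict Implicit. Unset Printing Implicit Defensive.
Import Order.TTheory GRing.Theory Num.Theory.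
Local Open Scope ring_scope.

Section Complexes.
Variable R : pzRingType.

Record cplx := Cplx {
  obj : int -> lmodType R;
  dif : forall n : int, obj (n + 1) -> obj n }.
Arguments obj : clear implicits.
Arguments dif : clear implicits.

Definition is_complex (C : cplx) : Prop :=
  (forall n, linear (dif C n)) /\
  (forall n (x : obj C (n + 1 + 1)), dif C n (dif C (n + 1) x) = 0).

Definition chain_map (C B : cplx) (f : forall n, {linear obj C n -> obj B n}) :=
  forall n (x : obj C (n + 1)), dif B n (f (n + 1) x) = f n (dif C n x).

(* f ~ g : f_k - g_k = d h_k + h_{k-1} d, stated in degree k = n+1 *)
Definition chain_homotopic (C B : cplx) (f g : forall n, obj C n -> obj B n) :=
  exists h : forall n, {linear obj C n -> obj B (n + 1)},
    forall n (x : obj C (n + 1)),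
      f (n + 1) x - g (n + 1) x = dif B (n + 1) (h (n + 1) x) + h n (dif C n x).

Definition chain_htpy_equiv (C B : cplx) :=
  exists (f : forall n, {linear obj C n -> obj B n})
         (g : forall n, {linear obj B n -> obj C n}),
    [/\ chain_map f, chain_map g,
        chain_homotopic (fun n x => g n (f n x)) (fun n x => x)
      & chain_homotopic (fun n x => f n (g n x)) (fun n x => x)].

Definition bounded (C : cplx) :=
  exists a b : int, forall n, (n < a \/ b < n) -> forall x : obj C n, x = 0.

Definition projective (P : lmodType R) :=
  forall (M N : lmodType R) (g : {linear M -> N}) (f : {linear P -> N}),
    (forall y, exists x, g x = y) ->
    exists h : {linear P -> M}, forall p, g (h p) = f p.

Definition fin_gen (M : lmodType R) :=
  exists s : seq M, forall x : M,
    exists c : 'I_(size s) -> R, x = \sum_(i < size s) c i *: s`_i.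

Definition fg_free (M : lmodType R) :=
  exists (n : nat) (phi : {linear 'rV[R]_n -> M}), bijective phi.

Definition fin_dominated (C : cplx) :=
  exists D : cplx, [/\ is_complex D, bounded D,
    (forall n, projective (obj D n) /\ fin_gen (obj D n)) & chain_htpy_equiv C D].

Definition homotopy_finite (C : cplx) :=
  exists D : cplx, [/\ is_complex D, bounded D,
    (forall n, fg_free (obj D n)) & chain_htpy_equiv C D].

Definition dcast (C : cplx) (m n : int) (e : m = n) (x : obj C m) : obj C n :=
  eq_rect m (fun k => obj C k) x n e.

Lemma cone_e1 (n : int) : n + 1 - 1 = n.
Proof. by rewrite addrK. Qed.
Lemma cone_e2 (n : int) : n + 1 - 1 = n - 1 + 1.
Proof. by rewrite addrK subrK. Qed.

(* Cone(f)_k = C_{k-1} (+) B_k, d(c,b) = (-dc, f(c) + db) *)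
Definition cone_obj (C B : cplx) : int -> lmodType R :=
  fun k => (obj C (k - 1) * obj B k)%type.

Definition cone (C B : cplx) (f : forall n, {linear obj C n -> obj B n}) : cplx :=
  @Cplx (cone_obj C B)
    (fun n (cb : cone_obj C B (n + 1)) =>
       ((- dif C (n - 1) (dcast (cone_e2 n) cb.1),
         f n (dcast (cone_e1 n) cb.1) + dif B n cb.2) : cone_obj C B n)).

End Complexes.

(* Main.v *)
Require Import Defs.
From HB Require Import structures.
From mathcomp Require Import all_boot all_order all_algebra.
Set Implicit Arguments. Unset Strict Implicit. Unset Printing Implicit Defensive.
Import GRing.Theory.
Local Open Scope ring_scope.
Inductive zexp := ZAtom of nat | Z0 | ZAdd of zexp & zexp | ZOpp of zexp.

Fixpoint zeval (V : zmodType) (env : seq V) (e : zexp) : V :=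
  match e with
  | ZAtom i => nth 0 env i
  | Z0 => 0
  | ZAdd a b => zeval env a + zeval env b
  | ZOpp a => - zeval env a
  end.

Fixpoint zcoef (e : zexp) (i : nat) : int :=
  match e with
  | ZAtom j => if i == j then 1 else 0
  | Z0 => 0
  | ZAdd a b => zcoef a i + zcoef b i
  | ZOpp a => - zcoef a i
  end.

Lemma zevalE (V : zmodType) (env : seq V) e :
  zeval env e = \sum_(i < size env) (nth 0 env i) *~ zcoef e i.
Proof.
elim: e => [j||a IHa b IHb|a IHa] /=.
- case: (ltnP j (size env)) => hj.
  + rewrite (bigD1 (Ordinal hj)) //= eqxx mulr1z big1 ?addr0 // => i /negbTE.
    by move=> ne; have -> : (i == j :> nat) = false by apply: contraFF ne => /eqP e; apply/eqP/val_inj.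
  + rewrite nth_default // big1 // => i _.
    have -> : (i == j :> nat) = false by apply/negbTE; rewrite neq_ltn (leq_trans (ltn_ord i) hj).
    by rewrite mulr0z.
- by rewrite big1 // => i _; rewrite mulr0z.
- by rewrite IHa IHb -big_split /=; apply: eq_bigr => i _; rewrite mulrzDr.
- by rewrite IHa -sumrN; apply: eq_bigr => i _; rewrite mulrNz.
Qed.

Lemma zsound (V : zmodType) (env : seq V) e1 e2 :
  all (fun i => zcoef e1 i == zcoef e2 i) (iota 0 (size env)) ->
  zeval env e1 = zeval env e2.
Proof.
move=> /allP H; rewrite !zevalE; apply: eq_bigr => i _.
by have := H i; rewrite mem_iota add0n ltn_ord => /(_ isT) /eqP ->.
Qed.

Lemma zsound2 (V : zmodType) (env : seq V) (N : nat) e1 e2 :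
  all (fun i => zcoef e1 i == zcoef e2 i) (iota 0 N) -> size env == N ->
  zeval env e1 = zeval env e2.
Proof. by move=> H /eqP E; apply: zsound; rewrite E. Qed.

Ltac llen l :=
  lazymatch l with
  | nil => constr:(0%nat)
  | cons _ ?r => let n := llen r in constr:(S n)
  end.

Ltac zidx t env :=
  lazymatch env with
  | nil => constr:(false)
  | cons ?x ?rest =>
      let b := constr:(ltac:(tryif unify x t then exact true else exact false) : bool) in
      lazymatch b with
      | true => let n := llen rest in constr:(n)
      | false => zidx t rest end
  end.

Ltac zreify t env k :=
  lazymatch t with
  | GRing.zero => k Z0 env
  | GRing.add ?a ?b => zreify a env ltac:(fun ea env1 => zreify b env1 ltac:(fun eb env2 => k (ZAdd ea eb) env2))
  | GRing.opp ?a => zreify a env ltac:(fun ea env1 => k (ZOpp ea) env1)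
  | _ => let i := zidx t env in
         lazymatch i with
         | false => let n := llen env in k (ZAtom n) (cons t env)
         | _ => k (ZAtom i) env
         end
  end.

Ltac zmod :=
  lazymatch goal with
  | |- @eq ?T ?l ?r =>
    zreify l (@nil T) ltac:(fun el env1 =>
    zreify r env1 ltac:(fun er env2 =>
      change (zeval (rev env2) el = zeval (rev env2) er);
      let N := llen env2 in
      apply: (@zsound2 _ _ N); [vm_compute; reflexivity | by []]))
  end.


Section S.
Variable R : pzRingType.
Implicit Types C D : cplx R.

Definition mkLin (U V : lmodType R) (f : U -> V) (H : linear f) : {linear U -> V} :=
  HB.pack f (GRing.isLinear.Build _ _ _ _ f H).

Lemma dcast_id C n (e : n = n) (x : obj C n) : dcast e x = x.
Proof. by rewrite (eq_irrelevance e erefl). Qed.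

Section Lin.
Variables (U V : lmodType R) (f : U -> V) (Hf : linear f).
Lemma linD' a b : f (a + b) = f a + f b. Proof. exact: (linearD (mkLin Hf)). Qed.
Lemma linN' a : f (- a) = - f a. Proof. exact: (linearN (mkLin Hf)). Qed.
Lemma lin0' : f 0 = 0. Proof. exact: (linear0 (mkLin Hf)). Qed.
Lemma linB' a b : f (a - b) = f a - f b. Proof. exact: (linearB (mkLin Hf)). Qed.
Lemma linZ' k a : f (k *: a) = k *: f a. Proof. exact: (linearZZ (mkLin Hf)). Qed.
End Lin.

Lemma difD C (HC : is_complex C) (n : int) (a b : obj C (n+1)) : dif (a + b) = dif a + dif b.
Proof. case: HC => H _; exact: (linD' (H n) a b). Qed.
Lemma difN C (HC : is_complex C) (n : int) (a : obj C (n+1)) : dif (- a) = - dif a.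
Proof. case: HC => H _; exact: (linN' (H n) a). Qed.
Lemma dif0 C (HC : is_complex C) (n : int) : @dif _ C n 0 = 0.
Proof. case: HC => H _; exact: (lin0' (H n)). Qed.
Lemma difdif C (HC : is_complex C) (n : int) (a : obj C (n+1+1)) : dif (dif a) = 0.
Proof. by case: HC => _ H; exact: H. Qed.

Definition cmapf C D (phi : forall n, obj C n -> obj D n)
  (x : forall n, obj C n -> obj D (n+1)) n (cb : cone_obj C C n) : cone_obj D D n :=
  (phi (n-1) cb.1, phi n cb.2 + dcast (subrK 1 n) (x (n-1) cb.1)).
Arguments cmapf {C D} phi x n cb.

Lemma cone_map_chain C D (HC : is_complex C) (HD : is_complex D)
  (u : forall n, {linear obj C n -> obj C n})
  (u' : forall n, {linear obj D n -> obj D n})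
  (phi : forall n, {linear obj C n -> obj D n}) (x : forall n, {linear obj C n -> obj D (n+1)}) :
  chain_map phi ->
  (forall n c, phi (n+1) (u (n+1) c) - u' (n+1) (phi (n+1) c) = dif (x (n+1) c) + x n (dif c)) ->
  forall n (cb : obj (cone u) (n+1)),
  @dif _ (cone u') n (cmapf phi x (n+1) cb) = cmapf phi x n (@dif _ (cone u) n cb).
Proof.
move=> Hphi Hx n [c b]; rewrite /cmapf /=.
move: (cone_e1 n) (cone_e2 n) (subrK 1 (n+1)) (subrK 1 n).
move: c; move: (n + 1 - 1) => m c e1; subst m => /= e2 e3 e4.
rewrite !dcast_id.
move: (n-1) e2 e4 => p e2; subst n => e4; rewrite !dcast_id.
rewrite Hphi linearN; congr (_, _).
rewrite difD // !linearD Hphi /=.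
have E : dif (x (p+1) c) = phi (p+1) (u (p+1) c) - u' (p+1) (phi (p+1) c) - x p (dif c).
  by rewrite Hx addrK.
rewrite E linearN; zmod.
Qed.

Lemma dcast_lin C m n (e : m = n) : linear (@dcast _ C m n e).
Proof. by case: n / e. Qed.
Lemma dcastD C m n (e : m = n) (a b : obj C m) : dcast e (a + b) = dcast e a + dcast e b.
Proof. by case: n / e. Qed.
Lemma dcastN C m n (e : m = n) (a : obj C m) : dcast e (- a) = - dcast e a.
Proof. by case: n / e. Qed.
Lemma dcastZ C m n (e : m = n) k (a : obj C m) : dcast e (k *: a) = k *: dcast e a.
Proof. by case: n / e. Qed.
Lemma dcast0 C m n (e : m = n) : dcast e (0 : obj C m) = 0.
Proof. by case: n / e. Qed.

Lemma cmap_lin C D (phi : forall n, {linear obj C n -> obj D n})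
  (x : forall n, {linear obj C n -> obj D (n+1)}) n : linear (cmapf phi x n).
Proof.
move=> a [c1 b1] [c2 b2]; rewrite /cmapf /=.
rewrite !linearP dcastD dcastZ; congr (_, _) => /=; rewrite scalerDr; zmod.
Qed.

Definition cmap C D phi x n : {linear cone_obj C C n -> cone_obj D D n} := mkLin (@cmap_lin C D phi x n).

Lemma eA (n : int) : n - 1 + 1 = n + 1 - 1. Proof. by rewrite subrK addrK. Qed.
Lemma eB (n : int) : n - 1 + 1 + 1 = n + 1. Proof. by rewrite subrK. Qed.
Definition tmapf C D (k : forall n, obj C n -> obj D (n+1)) (z : forall n, obj C n -> obj D (n+1+1))
  n (cb : cone_obj C C n) : cone_obj D D (n+1) :=
  (- dcast (eA n) (k (n-1) cb.1), k n cb.2 + dcast (eB n) (z (n-1) cb.1)).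
Arguments tmapf {C D} k z n cb.


Lemma eq_subE (V : zmodType) (a b c : V) : a - b = c -> a = b + c.
Proof. by move=> <-; rewrite addrC subrK. Qed.

Ltac gencasts := repeat match goal with
  |- context [@dcast _ _ _ _ ?e _] => tryif is_var e then fail else generalize e end.




Lemma difZ C (HC : is_complex C) (n : int) a (x : obj C (n+1)) : dif (a *: x) = a *: dif x.
Proof. case: HC => H _; exact: (linZ' (H n) a x). Qed.

Lemma cone_dd_aux C (HC : is_complex C) (u : forall n, {linear obj C n -> obj C n}) :
  chain_map u -> forall (n m q p : int) (c : obj C q) (b : obj C (n+1+1))
  (e : q = n + 1) (e0 : m = n) (e1 : q = m + 1) (e2 : m = p + 1),
  ((- dif (dcast e2 (- dif (dcast e1 c))),
   u n (dcast e0 (- dif (dcast e1 c))) + dif (u (n + 1) (dcast e c) + dif b)) : obj C p * obj C n) =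
  0.
Proof.
move=> Hu n m q p c b e e0 e1 e2; subst q m n; rewrite !dcast_id.
congr (_, _).
  by rewrite (difN HC) (difdif HC) !oppr0.
by rewrite (difD HC) (difdif HC) Hu (linearN (u _)) addr0 addNr.
Qed.

Lemma cone_dd C (HC : is_complex C) (u : forall n, {linear obj C n -> obj C n}) :
  chain_map u -> forall (n : int) (x : obj (cone u) (n+1+1)),
  @dif _ (cone u) n (@dif _ (cone u) (n+1) x) = 0.
Proof.
move=> Hu n [c b] /=.
gencasts; exact: cone_dd_aux.
Qed.

Lemma cone_lin C (HC : is_complex C) (u : forall n, {linear obj C n -> obj C n}) n :
  linear (@dif _ (cone u) n).
Proof.
move=> a [c1 b1] [c2 b2] /=.
rewrite !dcastD !dcastZ (difD HC) (difZ HC) (linearP (u n)) (difD HC) (difZ HC).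
congr (_, _) => /=; [rewrite scalerN; zmod | rewrite scalerDr; zmod].
Qed.

Lemma cone_complex C (HC : is_complex C) (u : forall n, {linear obj C n -> obj C n}) :
  chain_map u -> is_complex (cone u).
Proof. by move=> Hu; split; [exact: cone_lin | exact: cone_dd]. Qed.

Lemma dcast_linnat C D (phi : forall n, {linear obj C n -> obj D n}) m n (e : m = n) (w : obj C m) :
  phi n (dcast e w) = dcast e (phi m w).
Proof. by case: n / e. Qed.

Lemma cmap_comp C D E (phi : forall n, {linear obj C n -> obj D n})
  (x : forall n, {linear obj C n -> obj D (n+1)})
  (psi : forall n, {linear obj D n -> obj E n})
  (y : forall n, {linear obj D n -> obj E (n+1)}) (n : int) (cb : cone_obj C C n) :
  cmapf psi y n (cmapf phi x n cb) =
  cmapf (fun n => psi n \o phi n) (fun n => (psi (n+1) \o x n) \+ (y n \o phi n)) n cb.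
Proof.
case: cb => c b; rewrite /cmapf /=; congr (_, _).
by rewrite linearD dcast_linnat dcastD addrA.
Qed.

Lemma cmap_id C (n : int) (cb : cone_obj C C n) :
  cb = cmapf (fun n => @idfun (obj C n)) (fun n => (\0 : obj C n -> obj C (n+1))) n cb.
Proof. by case: cb => c b; rewrite /cmapf /= dcast0 addr0. Qed.

Lemma tmap_lin C D (k : forall n, {linear obj C n -> obj D (n+1)})
  (z : forall n, {linear obj C n -> obj D (n+1+1)}) n : linear (tmapf k z n).
Proof.
move=> a [c1 b1] [c2 b2]; rewrite /tmapf /=.
rewrite !linearP dcastD dcastZ; congr (_, _) => /=; rewrite ?dcastD ?dcastZ ?scalerN ?scalerDr; zmod.
Qed.

Definition tmap C D k z n : {linear cone_obj C C n -> cone_obj D D (n+1)} := mkLin (@tmap_lin C D k z n).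

Lemma htpy_ext C D (F F' G G' : forall n, obj C n -> obj D n) :
  (forall n x, F n x = F' n x) -> (forall n x, G n x = G' n x) ->
  chain_homotopic F' G' -> chain_homotopic F G.
Proof. by move=> EF EG [h Hh]; exists h => n x; rewrite EF EG. Qed.

Lemma sub_eqE2 (V : zmodType) (a b c : V) : a - b = c -> b = a - c.
Proof. by move=> <-; zmod. Qed.

Section HtpyAux.
Variables (C D : cplx R) (HC : is_complex C) (HD : is_complex D)
  (u : forall n, {linear obj C n -> obj C n})
  (u' : forall n, {linear obj D n -> obj D n})
  (phi1 phi2 : forall n, {linear obj C n -> obj D n})
  (x1 x2 : forall n, {linear obj C n -> obj D (n+1)})
  (k : forall n, {linear obj C n -> obj D (n+1)})
  (z : forall n, {linear obj C n -> obj D (n+1+1)}).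
Hypotheses (Hu : chain_map u)
  (Hk : forall n c, phi1 (n+1) c - phi2 (n+1) c = dif (k (n+1) c) + k n (dif c))
  (Hz : forall n (c : obj C (n+1)), x1 (n+1) c - x2 (n+1) c =
      k (n+1) (u (n+1) c) - u' (n+1+1) (k (n+1) c) + dif (z (n+1) c) - z n (dif c)).

Lemma htpy_aux (n m q p : int) (c : obj C m) (b : obj C (n+1))
  (e : p + 1 + 1 = n + 1) (e0 : m = n) (e1 : m = p + 1) (e2 : p + 1 = m)
  (e3 : m + 1 + 1 = n + 1 + 1) (e4 : q = n + 1) (e5 : m + 1 = q) (e6 : q = m + 1)
  (e7 : m + 1 = n + 1) :
  ((phi1 m c, phi1 (n + 1) b + dcast e7 (x1 m c)) -
  (phi2 m c, phi2 (n + 1) b + dcast e7 (x2 m c))) =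
  ((- dif (dcast e6 (- dcast e5 (k m c))),
   u' (n + 1) (dcast e4 (- dcast e5 (k m c))) +
   dif (k (n + 1) b + dcast e3 (z m c)))) +
  ((- dcast e2 (k p (- dif (dcast e1 c))),
   k n (u n (dcast e0 c) + dif b) + dcast e (z p (- dif (dcast e1 c))))).
Proof.
subst m q n; rewrite !dcast_id.
congr (_, _) => /=.
  by rewrite (eq_subE (Hk c)) (difN HD) (linearN (k p)); zmod.
rewrite (eq_subE (Hk b)) (eq_subE (Hz c)) (linearN (z p)) (linearN (u' _)) (linearD (k _)) (difD HD); zmod.
Qed.
Lemma cone_htpy_eq (n : int) (cb : obj (cone u) (n+1)) :
  cmapf phi1 x1 (n+1) cb - cmapf phi2 x2 (n+1) cb =
  @dif _ (cone u') (n+1) (tmapf k z (n+1) cb) + tmapf k z n (@dif _ (cone u) n cb).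
Proof.
case: cb => c b; rewrite /cmapf /tmapf /=.
gencasts; exact: htpy_aux.
Qed.

Lemma cone_htpy : @chain_homotopic _ (cone u) (cone u') (fun n => cmapf phi1 x1 n) (fun n => cmapf phi2 x2 n).
Proof. by exists (fun n => tmap k z n) => n cb; exact: cone_htpy_eq. Qed.
End HtpyAux.

Lemma cone_equiv C D (HC : is_complex C) (HD : is_complex D)
  (u : forall n, {linear obj C n -> obj C n})
  (u' : forall n, {linear obj D n -> obj D n})
  (phi : forall n, {linear obj C n -> obj D n})
  (psi : forall n, {linear obj D n -> obj C n})
  (x : forall n, {linear obj C n -> obj D (n+1)})
  (y : forall n, {linear obj D n -> obj C (n+1)})
  (k1 : forall n, {linear obj C n -> obj C (n+1)})
  (z1 : forall n, {linear obj C n -> obj C (n+1+1)})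
  (k2 : forall n, {linear obj D n -> obj D (n+1)})
  (z2 : forall n, {linear obj D n -> obj D (n+1+1)}) :
  chain_map u -> chain_map u' -> chain_map phi -> chain_map psi ->
  (forall n c, phi (n+1) (u (n+1) c) - u' (n+1) (phi (n+1) c) = dif (x (n+1) c) + x n (dif c)) ->
  (forall n c, psi (n+1) (u' (n+1) c) - u (n+1) (psi (n+1) c) = dif (y (n+1) c) + y n (dif c)) ->
  (forall n c, psi (n+1) (phi (n+1) c) - c = dif (k1 (n+1) c) + k1 n (dif c)) ->
  (forall n (c : obj C (n+1)), psi (n+1+1) (x (n+1) c) + y (n+1) (phi (n+1) c) =
      k1 (n+1) (u (n+1) c) - u (n+1+1) (k1 (n+1) c) + dif (z1 (n+1) c) - z1 n (dif c)) ->
  (forall n c, phi (n+1) (psi (n+1) c) - c = dif (k2 (n+1) c) + k2 n (dif c)) ->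
  (forall n (c : obj D (n+1)), phi (n+1+1) (y (n+1) c) + x (n+1) (psi (n+1) c) =
      k2 (n+1) (u' (n+1) c) - u' (n+1+1) (k2 (n+1) c) + dif (z2 (n+1) c) - z2 n (dif c)) ->
  chain_htpy_equiv (cone u) (cone u').
Proof.
move=> Hu Hu' Hphi Hpsi EX EY Hk1 Hz1 Hk2 Hz2.
exists (fun n => cmap phi x n), (fun n => cmap psi y n); split.
- move=> n cb; exact: cone_map_chain.
- move=> n cb; exact: cone_map_chain.
- apply: htpy_ext; [exact: cmap_comp | exact: cmap_id | ].
  apply: (@cone_htpy C C HC u u (fun n => psi n \o phi n) (fun n => idfun)
     (fun n => (psi (n+1) \o x n) \+ (y n \o phi n)) (fun n => \0) k1 z1) => //.
  by move=> n c /=; rewrite subr0; exact: Hz1.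
- apply: htpy_ext; [exact: cmap_comp | exact: cmap_id | ].
  apply: (@cone_htpy D D HD u' u' (fun n => phi n \o psi n) (fun n => idfun)
     (fun n => (phi (n+1) \o y n) \+ (x n \o psi n)) (fun n => \0) k2 z2) => //.
  by move=> n c /=; rewrite subr0; exact: Hz2.
Qed.

Lemma equiv_trans (A B E : cplx R) : is_complex A -> is_complex B -> is_complex E ->
  chain_htpy_equiv A B -> chain_htpy_equiv B E -> chain_htpy_equiv A E.
Proof.
move=> HA HB HE [f1 [g1 [Hf1 Hg1 [h1 Hh1] [k1 Hk1]]]] [f2 [g2 [Hf2 Hg2 [h2 Hh2] [k2 Hk2]]]].
exists (fun n => f2 n \o f1 n), (fun n => g1 n \o g2 n); split.
- by move=> n x /=; rewrite Hf2 Hf1.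
- by move=> n x /=; rewrite Hg1 Hg2.
- exists (fun n => (g1 (n+1) \o h2 n \o f1 n) \+ h1 n) => n x /=.
  rewrite (difD HA) Hg1 -Hf1.
  rewrite (eq_subE (Hh2 _ (f1 _ x))) !linearD (eq_subE (Hh1 _ x)); zmod.
- exists (fun n => (f2 (n+1) \o k1 n \o g2 n) \+ k2 n) => n x /=.
  rewrite (difD HE) Hf2 -Hg2.
  rewrite (eq_subE (Hk1 _ (g2 _ x))) !linearD (eq_subE (Hk2 _ x)); zmod.
Qed.

Section Retract.
Variables (D P : cplx R) (HD : is_complex D) (HP : is_complex P)
  (u : forall n, {linear obj D n -> obj D n})
  (g : forall n, {linear obj P n -> obj P n})
  (s : forall n, {linear obj D n -> obj P n})
  (p : forall n, {linear obj P n -> obj D n}).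
Hypotheses (Hu : chain_map u) (Hg : chain_map g) (Hs : chain_map s) (Hp : chain_map p)
  (Hps : forall n c, p n (s n c) = c)
  (Hgs : forall n c, g n (s n c) = s n (u n c))
  (Hpg : forall n c, p n (g n c) = u n (p n c))
  (He1 : forall n c, g n c - s n (p n (g n c)) = c - s n (p n c))
  (Hed : forall n (b : obj P (n+1)), dif (b - s (n+1) (p (n+1) b)) = 0)
  (Hde : forall n (b : obj P (n+1)), dif b - s n (p n (dif b)) = 0)
  (He3 : forall n b, g n (b - s n (p n b)) = b - s n (p n b)).

Lemma eC (n : int) : n = n + 1 - 1. Proof. by rewrite addrK. Qed.
Definition rtf n (cb : cone_obj P P n) : cone_obj P P (n+1) :=
  (- dcast (eC n) (cb.2 - s n (p n cb.2)), 0).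

Arguments rtf : clear implicits.
Lemma rt_aux (n m q : int) (c : obj P m) (b : obj P (n+1))
  (e : m = n) (e0 : n = m) (e1 : q = n + 1) (e2 : n + 1 = q) (e3 : q = m + 1) (e4 : m + 1 = n + 1) :
  ((s m (p m c), s (n + 1) (p (n + 1) b + dcast e4 0) + dcast e4 0) - (c, b) : obj P m * obj P (n+1)) =
  (- dif (dcast e3 (- dcast e2 (b - s (n + 1) (p (n + 1) b)))),
   g (n + 1) (dcast e1 (- dcast e2 (b - s (n + 1) (p (n + 1) b)))) + dif 0) +
  (- dcast e0 (g n (dcast e c) + dif b - s n (p n (g n (dcast e c) + dif b))), 0).
Proof.
subst q m; rewrite !dcast_id; congr (_, _) => /=.
  rewrite (difN HP) Hed oppr0 (linearD (p n)) (linearD (s n)).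
  rewrite (sub_eqE2 (He1 c)) (sub_eqE2 (Hde b)); zmod.
by rewrite (dif0 HP) (linearN (g _)) He3 !addr0; zmod.
Qed.

Lemma rt_eq (n : int) (cb : obj (cone g) (n+1)) :
  cmapf s (fun n => \0) (n+1) (cmapf p (fun n => \0) (n+1) cb) - cb =
  @dif _ (cone g) (n+1) (rtf (n+1) cb) + rtf n (@dif _ (cone g) n cb).
Proof.
case: cb => c b; rewrite /cmapf /rtf /=.
gencasts; exact: rt_aux.
Qed.

Lemma rt_lin n : linear (rtf n).
Proof.
move=> a [c1 b1] [c2 b2]; rewrite /rtf /=.
congr (_, _) => /=; last by rewrite scaler0 addr0.
rewrite (linearP (p n)) (linearP (s n)) ?dcastD ?dcastN ?dcastD ?dcastN ?dcastZ ?dcastD ?dcastN ?scalerN ?scalerDr ?scalerN ?scalerN; zmod.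
Qed.

Lemma retract_equiv : chain_htpy_equiv (cone u) (cone g).
Proof.
exists (fun n => cmap s (fun n => \0) n), (fun n => cmap p (fun n => \0) n); split.
- move=> n cb; apply: cone_map_chain => // m c /=.
  by rewrite Hgs subrr (dif0 HP) addr0.
- move=> n cb; apply: cone_map_chain => // m c /=.
  by rewrite Hpg subrr (dif0 HD) addr0.
- apply: htpy_ext; [exact: cmap_comp | exact: cmap_id | ].
  apply: (@cone_htpy D D HD u u (fun n => p n \o s n) (fun n => idfun)
     (fun n => (p (n+1) \o \0) \+ (\0 \o s n)) (fun n => \0) (fun n => \0) (fun n => \0)).
  + by move=> m c /=; rewrite Hps subrr (dif0 HD) addr0.
  + by move=> m c /=; rewrite (linear0 (p _)) (linear0 (u _)) (dif0 HD); zmod.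
- exists (fun n => mkLin (@rt_lin n)) => n cb; exact: rt_eq.
Qed.
End Retract.

Section StepA.
Variables (C D : cplx R) (HC : is_complex C) (HD : is_complex D)
  (f : forall n, {linear obj C n -> obj C n})
  (phi : forall n, {linear obj C n -> obj D n})
  (psi : forall n, {linear obj D n -> obj C n})
  (h : forall n, {linear obj C n -> obj C (n+1)})
  (k : forall n, {linear obj D n -> obj D (n+1)}).
Hypotheses (Hf : chain_map f) (Hphi : chain_map phi) (Hpsi : chain_map psi)
  (Hh : forall (n : int) (c : obj C (n+1)), psi (n+1) (phi (n+1) c) - c = dif (h (n+1) c) + h n (dif c))
  (Hk : forall (n : int) (c : obj D (n+1)), phi (n+1) (psi (n+1) c) - c = dif (k (n+1) c) + k n (dif c)).

Lemma Dh (n : int) (c : obj C (n+1)) : dif (h (n+1) c) = psi (n+1) (phi (n+1) c) - c - h n (dif c).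
Proof. by rewrite Hh addrK. Qed.
Lemma Dk (n : int) (c : obj D (n+1)) : dif (k (n+1) c) = phi (n+1) (psi (n+1) c) - c - k n (dif c).
Proof. by rewrite Hk addrK. Qed.

Ltac lin := rewrite ?(difD HC) ?(difD HD) ?(difN HC) ?(difN HD) ?(dif0 HC) ?(dif0 HD)
  ?(linearD (f _)) ?(linearN (f _)) ?(linear0 (f _))
  ?(linearD (phi _)) ?(linearN (phi _)) ?(linear0 (phi _))
  ?(linearD (psi _)) ?(linearN (psi _)) ?(linear0 (psi _))
  ?(linearD (h _)) ?(linearN (h _)) ?(linear0 (h _))
  ?(linearD (k _)) ?(linearN (k _)) ?(linear0 (k _)).
Ltac nstep := rewrite ?Hf ?Hphi ?Hpsi ?Dh ?Dk ?(difdif HC) ?(difdif HD).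
Ltac nrm := do 8 (lin; nstep).

Definition fp n : {linear obj D n -> obj D n} := phi n \o f n \o psi n.

Lemma EX (n : int) (c : obj C (n+1)) :
  phi (n+1) (f (n+1) c) - fp (n+1) (phi (n+1) c) =
  dif ((\- (phi (n+1+1) \o f (n+1+1) \o h (n+1))) c) + (\- (phi (n+1) \o f (n+1) \o h n)) (dif c).
Proof. rewrite /fp /=; nrm; zmod. Qed.

Definition xA n : {linear obj C n -> obj D (n+1)} := \- (phi (n+1) \o f (n+1) \o h n).
Definition yA n : {linear obj D n -> obj C (n+1)} := h n \o f n \o psi n.
Definition z1A n : {linear obj C n -> obj C (n+1+1)} := \- (h (n+1) \o f (n+1) \o h n).
Definition k2A n : {linear obj D n -> obj D (n+1)} :=
  (k n \+ (phi (n+1) \o h n \o psi n)) \- (k n \o phi n \o psi n).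
Definition z2A n : {linear obj D n -> obj D (n+1+1)} :=
  (((\- ((k (n+1) \o phi (n+1)) \- (phi (n+1+1) \o h (n+1)))) \o (h n \o f n \o psi n))
   \+ (phi (n+1+1) \o f (n+1+1) \o psi (n+1+1) \o k (n+1) \o k n)
   \+ (phi (n+1+1) \o f (n+1+1) \o h (n+1) \o h n \o psi n))
   \- (phi (n+1+1) \o f (n+1+1) \o h (n+1) \o psi (n+1) \o k n).

Lemma EY (n : int) (c : obj D (n+1)) :
  psi (n+1) (fp (n+1) c) - f (n+1) (psi (n+1) c) = dif (yA (n+1) c) + yA n (dif c).
Proof. rewrite /fp /yA /=; nrm; zmod. Qed.

Lemma Z1 (n : int) (c : obj C (n+1)) :
  psi (n+1+1) (xA (n+1) c) + yA (n+1) (phi (n+1) c) =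
  h (n+1) (f (n+1) c) - f (n+1+1) (h (n+1) c) + dif (z1A (n+1) c) - z1A n (dif c).
Proof. rewrite /xA /yA /z1A /=; nrm; zmod. Qed.

Lemma K2 (n : int) (c : obj D (n+1)) :
  phi (n+1) (psi (n+1) c) - c = dif (k2A (n+1) c) + k2A n (dif c).
Proof. rewrite /k2A /=; nrm; zmod. Qed.

Lemma Z2 (n : int) (c : obj D (n+1)) :
  phi (n+1+1) (yA (n+1) c) + xA (n+1) (psi (n+1) c) =
  k2A (n+1) (fp (n+1) c) - fp (n+1+1) (k2A (n+1) c) + dif (z2A (n+1) c) - z2A n (dif c).
Proof. rewrite /k2A /z2A /xA /yA /fp /=; nrm; zmod. Qed.
End StepA.

Lemma stepA C D (HC : is_complex C) (HD : is_complex D)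
  (f : forall n, {linear obj C n -> obj C n})
  (phi : forall n, {linear obj C n -> obj D n})
  (psi : forall n, {linear obj D n -> obj C n})
  (h : forall n, {linear obj C n -> obj C (n+1)})
  (k : forall n, {linear obj D n -> obj D (n+1)}) :
  chain_map f -> chain_map phi -> chain_map psi ->
  (forall (n : int) (c : obj C (n+1)), psi (n+1) (phi (n+1) c) - c = dif (h (n+1) c) + h n (dif c)) ->
  (forall (n : int) (c : obj D (n+1)), phi (n+1) (psi (n+1) c) - c = dif (k (n+1) c) + k n (dif c)) ->
  chain_map (fp f phi psi) /\ chain_htpy_equiv (cone f) (cone (fp f phi psi)).
Proof.
move=> Hf Hphi Hpsi Hh Hk.
have Hfp : chain_map (fp f phi psi) by move=> n c; rewrite /fp /= Hphi Hf Hpsi.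
split => //.
apply: (cone_equiv HC HD (x := xA f phi h) (y := yA f psi h) (k1 := h) (z1 := z1A f h)
   (k2 := k2A phi psi h k) (z2 := z2A f phi psi h k)) => //.
- exact: EX.
- exact: EY.
- exact: Z1.
- exact: K2.
- exact: Z2.
Qed.

Lemma fgf (m1 m2 : nat) : fg_free ('rV[R]_m1 * 'rV[R]_m2)%type.
Proof.
have L : linear (fun r : 'rV[R]_(m1 + m2) => (lsubmx r, rsubmx r) : ('rV[R]_m1 * 'rV[R]_m2)%type).
  by move=> a r1 r2; rewrite /= (linearP (@lsubmx R 1 m1 m2)) (linearP (@rsubmx R 1 m1 m2)).
exists (m1 + m2)%N, (mkLin L); exists (fun q => row_mx q.1 q.2).
- by move=> r /=; rewrite hsubmxK.
- by case=> q1 q2 /=; rewrite row_mxKl row_mxKr.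
Qed.

End S.

From Stdlib Require Import ClassicalEpsilon.
From mathcomp Require Import zify.
Import Order.TTheory Num.Theory.

Section S.
Variable R : pzRingType.
Section StepB.
Variables (D : cplx R) (HD : is_complex D) (u : forall n, {linear obj D n -> obj D n})
  (Hu : chain_map u) (M : int -> nat)
  (Sm : forall n, {linear obj D n -> 'rV[R]_(M n)})
  (Pm : forall n, {linear 'rV[R]_(M n) -> obj D n}).
Hypotheses (HPS : forall n x, Pm n (Sm n x) = x).

Definition Pc : cplx R := @Cplx R (fun n => 'rV[R]_(M n)) (fun n x => Sm n (@dif _ D n (Pm (n+1) x))).

Lemma HP : is_complex Pc.
Proof.
split.
- move=> n a x y /=; by rewrite (linearP (Pm _)) (difD HD) (difZ HD) (linearP (Sm _)).
- by move=> n x /=; rewrite HPS (difdif HD) linear0.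
Qed.

Definition sB n : {linear obj D n -> obj Pc n} := Sm n.
Definition pB n : {linear obj Pc n -> obj D n} := Pm n.
Definition gB n : {linear obj Pc n -> obj Pc n} :=
  (sB n \o u n \o pB n) \+ (idfun \- (sB n \o pB n)).

Lemma B_equiv : chain_htpy_equiv (cone u) (cone gB).
Proof.
have Hs : chain_map sB by move=> n x /=; rewrite /sB HPS.
have Hp : chain_map pB by move=> n x /=; rewrite /pB HPS.
have Hg : chain_map gB.
  move=> n x /=; rewrite /gB /sB /pB /= !HPS.
  by rewrite (linearD (Pm _)) (linearB (Pm _)) !HPS subrr addr0 Hu; zmod.
apply: (retract_equiv (D:=D) (P:=Pc) HD HP (u:=u) (g:=gB) (s:=sB) (p:=pB)) => //.
- by move=> n c; rewrite /gB /sB /pB /= !HPS; zmod.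
- by move=> n c; rewrite /gB /sB /pB /= (linearD (Pm _)) (linearB (Pm _)) !HPS; zmod.
- by move=> n c; rewrite /gB /sB /pB /= (linearD (Pm _)) (linearB (Pm _)) !HPS subrr addr0; zmod.
- by move=> n c /=; rewrite /sB /pB (linearB (Pm _)) HPS subrr (dif0 HD) linear0.
- by move=> n c /=; rewrite /sB /pB HPS subrr.
- by move=> n c; rewrite /gB /sB /pB /= !(linearB (Pm _)) !HPS !subrr !linear0; zmod.
Qed.

Lemma B_complex : is_complex (cone gB).
Proof.
apply: cone_complex; first exact: HP.
move=> n x /=; rewrite /gB /sB /pB /= !HPS.
by rewrite (linearD (Pm _)) (linearB (Pm _)) !HPS subrr addr0 Hu; zmod.
Qed.

Lemma B_free n : fg_free (obj (cone gB) n).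
Proof. exact: (@fgf R (M (n-1)) (M n)). Qed.

Variables (a b : int).
Hypothesis HM : forall n, (n < a) || (b < n) -> M n = 0%N.

Lemma B_bounded : bounded (cone gB).
Proof.
exists a, (b + 1) => n Hn [x1 x2].
have H1 : M (n - 1) = 0%N.
  apply: HM; case: Hn => Hn; apply/orP; [left | right].
  - lia.
  - lia.
have H2 : M n = 0%N.
  apply: HM; case: Hn => Hn; apply/orP; [left | right] => //.
  lia.
have E1 : x1 = 0 by move: x1; rewrite /= H1 => x1; exact: thinmx0.
have E2 : x2 = 0 by move: x2; rewrite /= H2 => x2; exact: thinmx0.
by rewrite E1 E2.
Qed.
End StepB.
End S.

Section Split.
Variable R : pzRingType.

Lemma split_ex (D : cplx R) (a b : int)
  (Hb : forall n, (n < a \/ b < n) -> forall x : obj D n, x = 0) n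
  (Hn : projective (obj D n) /\ fin_gen (obj D n)) :
  exists t : {m : nat & ({linear obj D n -> 'rV[R]_m} * {linear 'rV[R]_m -> obj D n})%type},
   (forall x, (projT2 t).2 ((projT2 t).1 x) = x) /\ ((n < a) || (b < n) -> projT1 t = 0%N).
Proof.
case: (boolP ((n < a) || (b < n))) => Hout.
  exists (existT _ 0%N (\0 : {linear obj D n -> 'rV[R]_0}, \0 : {linear 'rV[R]_0 -> obj D n})).
  split => // x /=; symmetry; apply: Hb; by case/orP: Hout; [left | right].
case: Hn => Hpr [S HS].
pose pl (r : 'rV[R]_(size S)) : obj D n := \sum_(i < size S) r ord0 i *: S`_i.
have plL : linear pl.
  move=> c r1 r2; rewrite /pl scaler_sumr -big_split /=; apply: eq_bigr => i _.
  by rewrite !mxE scalerDl scalerA.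
have surj : forall y, exists x, mkLin plL x = y.
  move=> y; case: (HS y) => cc ->; exists (\row_i cc i) => /=; rewrite /pl.
  by apply: eq_bigr => i _; rewrite mxE.
case: (Hpr _ _ (mkLin plL) (idfun : {linear obj D n -> obj D n}) surj) => hh Hhh.
exists (existT _ (size S) (hh, mkLin plL)); split => /=.
  by move=> x; exact: Hhh.
by [].
Qed.
End Split.

Theorem proposition2p4 (R : pzRingType) (C : cplx R)
  (HC : is_complex C) (Hproj : forall n, projective (obj C n))
  (Hfd : fin_dominated C)
  (f : forall n, {linear obj C n -> obj C n}) (Hf : chain_map f) :
  homotopy_finite (cone f).
Proof.
case: Hfd => D [HD [a [b Hb]] Hpf [phi [psi [Hphi Hpsi [h Hh] [k Hk]]]]].
have [Hfp E1] := stepA HC HD Hf Hphi Hpsi Hh Hk.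
pose Hc n := constructive_indefinite_description _ (split_ex Hb (Hpf n)).
pose M n := projT1 (sval (Hc n)).
pose Sm n : {linear obj D n -> 'rV[R]_(M n)} := (projT2 (sval (Hc n))).1.
pose Pm n : {linear 'rV[R]_(M n) -> obj D n} := (projT2 (sval (Hc n))).2.
have HPS : forall n x, Pm n (Sm n x) = x by move=> n; exact: (proj2_sig (Hc n)).1.
have HM : forall n, (n < a) || (b < n) -> M n = 0%N by move=> n; exact: (proj2_sig (Hc n)).2.
exists (cone (gB (fp f phi psi) Sm Pm)); split.
- exact: B_complex.
- exact: B_bounded HM.
- exact: B_free.
- apply: (equiv_trans (cone_complex HC Hf) (cone_complex HD Hfp) (B_complex HD Hfp HPS) E1).
  exact: B_equiv.
Qed.
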